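(* Let $q=p^k$ for a prime $p \neq 3$, and let $G=\mathrm{PSL}(2,q)$ be considered as a permutation group in its transitive action on the left cosets of a subgroup isomorphic to $\mathbb{Z}_3$. Then a non-canonical basic intersecting set in $G$ contains no point stabilizer as a proper subset.
   Context: For a permutation group $G$ on a finite set $V$, a subset $\mathcal{F}\subseteq G$ is intersecting if for all $g,h\in\mathcal{F}$ there is $v\in V$ with $g(v)=h(v)$. A canonical intersecting set is a coset $gG_v$ of a point stabilizer ($g\in G$, $v\in V$). A basic intersecting set is an intersecting set containing the identity. *)

(* Defs.v *)
From HB Require Import structures.
From mathcomp Require Import all_boot all_order all_algebra all_fingroup all_solvable.
Set Implicit Arguments. Unset Strict Implicit. Unset Printing Implicit Defensive.
Import GRing.Theory.

Local Open Scope group_scope.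

Section PSL.
Variable F : finFieldType.

Definition SL2 : {set {'GL_2[F]}} := [set x | determinant (GLval x) == 1%R].

Lemma SL2_group_set : group_set SL2.
Proof.
apply/group_setP; split; first by rewrite inE GL_1E det1.
move=> x y; rewrite !inE => /eqP dx /eqP dy.
by rewrite GL_MxE det_mulmx dx dy mulr1.
Qed.

Canonical SL2_group := Group SL2_group_set.

Definition PSLtype := coset_of 'Z(SL2_group).
Definition PSL2 : {group PSLtype} := (SL2_group / 'Z(SL2_group))%G.
End PSL.

Section Intersecting.
Variable gT : finGroupType.
Variables G H : {set gT}.

(* the points: left cosets xH, x in G; g acts by g(xH) = gxH *)
Definition points : {set {set gT}} := lcosets H G.

Definition pstab (v : {set gT}) : {set gT} := [set g in G | g *: v == v].

Definition intersecting (S : {set gT}) : Prop :=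
  S \subset G /\
  forall g h, g \in S -> h \in S -> exists2 v, v \in points & g *: v = h *: v.

Definition canonical_int (S : {set gT}) : Prop :=
  exists g v, [/\ g \in G, v \in points & S = g *: pstab v].

Definition basic_int (S : {set gT}) : Prop := intersecting S /\ 1 \in S.
End Intersecting.

(* Main.v *)
Require Import Defs.
From mathcomp Require Import all_boot all_order all_algebra all_fingroup all_solvable.
From mathcomp Require Import all_field ring.
Set Implicit Arguments. Unset Strict Implicit. Unset Printing Implicit Defensive.

Section MatrixFacts.
Import GRing.Theory.
Local Open Scope ring_scope.

Definition mxn (F : Type) (M : 'M[F]_2) (k l : nat) := M (inord k) (inord l).
Arguments mxn : simpl never.

Lemma mx2E (F : Type) (M : 'M[F]_2) :
  forall i j : 'I_2, M i j = mxn M i j.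
Proof. by move=> i j; rewrite /mxn !inord_val. Qed.

Lemma det_mx2 (F : comNzRingType) (M : 'M[F]_2) :
  \det M = mxn M 0 0 * mxn M 1 1 - mxn M 0 1 * mxn M 1 0.
Proof.
rewrite (expand_det_row _ ord0) !big_ord_recl big_ord0 /cofactor !det_mx11 !mxE /=.
rewrite addr0 !expr0 !mul1r.
rewrite !(mx2E M) /=.
rewrite expr1; ring.
Qed.

Lemma mx2_CH (F : comNzRingType) (M : 'M[F]_2) :
  M *m M = \tr M *: M - (\det M)%:M.
Proof.
rewrite det_mx2 /mxtrace !big_ord_recl big_ord0.
apply/matrixP => i j; rewrite !mxE !big_ord_recl big_ord0 /=.
rewrite !(mx2E M) /=.
case: i => [[|[|i]] Hi] //; case: j => [[|[|j]] Hj] //= ; rewrite ?mulr1n ?mulr0n; ring.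
Qed.

Definition uf (F : nzRingType) (k l : nat) : F :=
  match k, l with 1, 0 => 0 | _, _ => 1 end.
Definition lf (F : nzRingType) (k l : nat) : F :=
  match k, l with 0, 1 => 0 | _, _ => 1 end.
Definition Umx (F : nzRingType) : 'M[F]_2 := \matrix_(i, j) uf F i j.
Definition Lmx (F : nzRingType) : 'M[F]_2 := \matrix_(i, j) lf F i j.

Lemma det_Umx (F : comNzRingType) : \det (Umx F) = 1.
Proof. by rewrite det_mx2 /mxn !mxE !inordK //= mulr1 mulr0 subr0. Qed.
Lemma det_Lmx (F : comNzRingType) : \det (Lmx F) = 1.
Proof. by rewrite det_mx2 /mxn !mxE !inordK //= mulr1 mul0r subr0. Qed.

Lemma comm_scalar (F : comNzRingType) (M : 'M[F]_2) :
  M *m Umx F = Umx F *m M -> M *m Lmx F = Lmx F *m M -> M = (M 0 0)%:M.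
Proof.
move=> eU eL.
have e1 := congr1 (fun X : 'M[F]_2 => X 0 0) eU.
have e2 := congr1 (fun X : 'M[F]_2 => X 0 1) eU.
have e3 := congr1 (fun X : 'M[F]_2 => X 0 0) eL.
have m12 : (1 %% 2 = 1)%N by [].
move: e1 e2 e3; rewrite /= !mxE !big_ord_recl !big_ord0 !mxE /=.
rewrite !(mx2E M) /= /uf /lf -?[bump 0 0]/1%N ?m12.
rewrite !mulr1 !mulr0 !mul1r !mul0r !addr0.
move=> e1 e2 e3.
have hc : mxn M 1 0 = 0.
  by apply: (@addrI _ (mxn M 0 0)); rewrite addr0 -e1.
have hb : mxn M 0 1 = 0.
  by apply: (@addrI _ (mxn M 0 0)); rewrite addr0 e3.
have hd : mxn M 1 1 = mxn M 0 0.
  by apply: (@addrI _ (mxn M 0 1)); rewrite -e2 addrC.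
apply/matrixP => i j; rewrite !mxE !(mx2E M) /=.
case: i => [[|[|i]] Hi] //; case: j => [[|[|j]] Hj] //=;
  by rewrite ?hb ?hc ?hd ?mulr1n ?mulr0n.
Qed.

Lemma tr_sq (F : fieldType) (M : 'M[F]_2) c :
  \det M = 1 -> M *m M *m M = c%:M -> (forall d, M != d%:M) -> \tr M ^+ 2 = 1.
Proof.
move=> dM e3 ns; set t := \tr M.
have CH := mx2_CH M; rewrite dM -/t in CH.
have E3 : M *m M *m M = (t ^+ 2 - 1) *: M - t%:M.
  rewrite CH mulmxBl -scalemxAl CH mul_scalar_mx scale1r.
  apply/matrixP => i j; rewrite !mxE; ring.
rewrite E3 in e3.
have e4 : (t ^+ 2 - 1) *: M = (c + t)%:M.
  by rewrite -[LHS](subrK t%:M) e3 -raddfD.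
case: (eqVneq (t ^+ 2 - 1) 0) => [/eqP|nz].
  by rewrite subr_eq0 => /eqP.
have := ns ((t ^+ 2 - 1)^-1 * (c + t)).
rewrite -scale_scalar_mx -e4 scalerA mulVf // scale1r eqxx //.
Qed.

End MatrixFacts.

Section GroupFacts.
Import GRing.Theory.
Local Open Scope group_scope.
Variable F : finFieldType.
Local Notation Z := ('Z(SL2_group F)).

Lemma Umx_unit : (Umx F : 'M[F]_(1.+1)) \is a GRing.unit.
Proof. by rewrite unitmxE det_Umx unitr1. Qed.
Lemma Lmx_unit : (Lmx F : 'M[F]_(1.+1)) \is a GRing.unit.
Proof. by rewrite unitmxE det_Lmx unitr1. Qed.

Definition UG : {'GL_2[F]} := FinRing.Unit Umx_unit.
Definition LG : {'GL_2[F]} := FinRing.Unit Lmx_unit.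

Lemma UG_SL : UG \in SL2 F.
Proof. by rewrite inE /= det_Umx. Qed.
Lemma LG_SL : LG \in SL2 F.
Proof. by rewrite inE /= det_Lmx. Qed.

Lemma scalar_central (X : {'GL_2[F]}) c :
  X \in SL2 F -> GLval X = (c%:M)%R -> X \in Z.
Proof.
move=> HX E; apply/centerP; split=> // y _.
by apply: val_inj; change (GLval (X * y) = GLval (y * X)); rewrite !GL_MxE E scalar_mxC.
Qed.

Lemma central_scalar (Y : {'GL_2[F]}) : Y \in Z -> GLval Y = ((GLval Y 0 0)%:M)%R.
Proof.
case/centerP => _ cY; apply: comm_scalar.
  by have := congr1 GLval (cY _ UG_SL); rewrite !GL_MxE.
by have := congr1 GLval (cY _ LG_SL); rewrite !GL_MxE.
Qed.

Lemma normZ (X : {'GL_2[F]}) : X \in SL2 F -> X \in 'N(Z).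
Proof. by move=> HX; apply: (subsetP (normal_norm (center_normal _))). Qed.

Lemma lift_tr (X : {'GL_2[F]}) :
  X \in SL2 F -> (coset Z X) ^+ 3 = 1 -> coset Z X != 1 ->
  (\tr (GLval X) ^+ 2 = 1)%R.
Proof.
move=> HX e3 n1.
have nX := normZ HX.
have X3Z : X ^+ 3 \in Z.
  by apply: coset_idr; [apply: groupX | rewrite morphX].
apply: (@tr_sq _ (GLval X : 'M[F]_2) (GLval (X ^+ 3) 0%R 0%R)).
- by move: HX; rewrite inE => /eqP.
- rewrite -(central_scalar X3Z) (_ : X ^+ 3 = X * X * X); last by rewrite !expgS expg0 mulg1 mulgA.
  by rewrite !GL_MxE.
- move=> d; apply/eqP => E; move/negP: n1; apply.
  by rewrite coset_id // (scalar_central HX E).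
Qed.

End GroupFacts.

Lemma lift_PSL (F : finFieldType) (x : PSLtype F) :
  x \in PSL2 F -> exists2 X, X \in SL2 F & x = coset 'Z(SL2_group F) X.
Proof.
by rewrite /PSL2 /= -imset_coset => /imsetP [X HX ->]; exists X.
Qed.

Lemma field_contra (F : finFieldType) (p k : nat) (r s u : F) :
  prime p -> p != 3 -> #|F| = (p ^ k)%N ->
  (r ^+ 2 = 1)%R -> (s ^+ 2 = 1)%R -> (u ^+ 2 = 1)%R -> ((s * u - r) ^+ 2 = 1)%R -> False.
Proof.
move=> pp p3 cF hr hs hu hsur.
have e : (2 * (s * u * r) = 1)%R.
  transitivity (s ^+ 2 * u ^+ 2 + r ^+ 2 - (s * u - r) ^+ 2)%R; first ring.
  rewrite hr hs hu hsur; ring.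
have e3 : (3%:R = 0 :> F)%R.
  transitivity (4 * (s ^+ 2 * u ^+ 2 * r ^+ 2) - 1 :> F)%R.
    rewrite hr hs hu; ring.
  transitivity ((2 * (s * u * r)) ^+ 2 - 1 :> F)%R; first ring.
  rewrite e; ring.
have pF := card_finPcharP cF pp.
have c3 : 3 \in [pchar F]%R by rewrite inE /= e3 eqxx.
move: c3; rewrite (GRing.pcharf_eq pF) inE => /eqP e3p.
by move/eqP: p3; apply; rewrite e3p.
Qed.

Import GRing.Theory.
Local Open Scope group_scope.

Theorem proposition2p13 (F : finFieldType) (p k : nat) :
  prime p -> p != 3 -> #|F| = (p ^ k)%N ->
  forall H : {group PSLtype F},
    H \subset PSL2 F -> H \isog Zp 3 ->
  forall S : {set PSLtype F},
    basic_int (PSL2 F) H S -> ~ canonical_int (PSL2 F) H S ->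
  forall v, v \in points (PSL2 F) H -> ~~ (pstab (PSL2 F) v \proper S).
Proof.
move=> pp p3 cF H sHG isoH S [[sSG intS] S1] _ v vP.
apply/negP => /properP [sVS [g gS gnV]].
have vP' := vP.
case/lcosetsP: vP => x xG ev.
have cH : #|H| = 3 by rewrite (card_isog isoH) card_Zp.
have H3 : forall y, y \in H -> y ^+ 3 = 1.
  by move=> y yH; rewrite -cH expg_cardG.
have [h hH h1] : exists2 h, h \in H & h != 1.
  by apply/trivgPn; rewrite -cardG_gt1 cH.
have fix3 : forall y w, w \in points (PSL2 F) H -> y *: w = w -> y ^+ 3 = 1.
  move=> y w /lcosetsP [z _ ->] E.
  have : y * z \in z *: H by rewrite -E -lcosetM; apply: lcoset_refl.
  rewrite mem_lcoset -conjgE => /H3.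
  by rewrite -conjXg => /eqP; rewrite conjg_eq1 => /eqP.
have conj_in : forall h', h' \in H -> h' ^ x^-1 \in pstab (PSL2 F) v.
  move=> h' h'H; have h'G : h' \in PSL2 F := subsetP sHG _ h'H.
  rewrite inE ev groupJ ?groupV //=.
  by rewrite -lcosetM conjgE invgK !mulgA mulgKV lcosetM lcoset_id.
have int3 : forall y, y \in S -> (y^-1 * g) ^+ 3 = 1.
  move=> y yS; have [w wP E] := intS g y gS yS.
  apply: (fix3 _ w wP).
  by rewrite lcosetM E -lcosetM mulVg lcoset1.
set b := h ^ x^-1.
have bV : b^-1 \in S by apply: (subsetP sVS); rewrite /b -conjVg conj_in ?groupV.
have bVV : b^-1 * b^-1 \in S.
  by apply: (subsetP sVS); rewrite /b -conjVg -conjMg conj_in ?groupM ?groupV.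
have g3 : g ^+ 3 = 1 by have := int3 _ S1; rewrite invg1 mul1g.
have bg3 : (b * g) ^+ 3 = 1 by have := int3 _ bV; rewrite invgK.
have bbg3 : (b * b * g) ^+ 3 = 1 by have := int3 _ bVV; rewrite invMg !invgK.
have b3 : b ^+ 3 = 1 by rewrite /b -conjXg H3 ?conj1g.
have b1 : b != 1 by rewrite /b conjg_eq1.
have g1 : g != 1.
  by apply: contraNneq gnV => ->; rewrite -(conj1g x^-1) conj_in.
have bg1 : b * g != 1.
  apply: contraNneq gnV => E; rewrite -[g](mulKg b) E mulg1.
  by rewrite /b -conjVg conj_in ?groupV.
have bbg1 : b * b * g != 1.
  apply: contraNneq gnV => E; rewrite -[g](mulKg (b * b)) E mulg1 invMg.
  rewrite /b -conjVg -conjMg. by rewrite conj_in ?groupM ?groupV.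
have gG : g \in PSL2 F by apply: (subsetP sSG).
have bG : b \in PSL2 F by rewrite /b groupJ ?groupV // (subsetP sHG).
have [A HA eA] := lift_PSL gG.
have [B HB eB] := lift_PSL bG.
have nA := normZ HA; have nB := normZ HB.
have hr : (\tr (GLval A) ^+ 2 = 1)%R by apply: lift_tr; rewrite // -eA.
have hs : (\tr (GLval B) ^+ 2 = 1)%R by apply: lift_tr; rewrite // -eB.
have eBA : b * g = coset 'Z(SL2_group F) (B * A) by rewrite morphM // eA eB.
have eBBA : b * b * g = coset 'Z(SL2_group F) (B * B * A)
  by rewrite !morphM ?groupM // eA eB.
have hu : (\tr (GLval (B * A)) ^+ 2 = 1)%R by apply: lift_tr; rewrite ?groupM // -eBA.
have huu : (\tr (GLval (B * B * A)) ^+ 2 = 1)%R by apply: lift_tr; rewrite ?groupM // -eBBA.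
have dB : (\det (GLval B) = 1)%R by move: HB; rewrite inE => /eqP.
have trBBA : (\tr (GLval (B * B * A)))%R =
             (\tr (GLval B) * \tr (GLval (B * A)) - \tr (GLval A))%R.
  rewrite !GL_MxE mx2_CH dB mulmxBl -scalemxAl mul_scalar_mx scale1r.
  by rewrite raddfB /= mxtraceZ.
rewrite trBBA in huu.
exact: (field_contra pp p3 cF hr hs hu huu).
Qed.
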